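(* Let $A=\begin{pmatrix} a & b\\ c & d\end{pmatrix}\in SL_2(\mathbb{Z})$ with $c>0$ and $d\neq 0$. (i) If $d>0$, let $S=\begin{pmatrix}0&-1\\1&0\end{pmatrix}$, so $AS=\begin{pmatrix} b&-a\\ d&-c\end{pmatrix}$; then $\epsilon_1(AS)=e^{-3\pi i/4}\epsilon_1(A)$. (ii) If $d<0$, let $S=\begin{pmatrix}0&1\\-1&0\end{pmatrix}$, so $AS=\begin{pmatrix} -b&a\\ -d&c\end{pmatrix}$; then $\epsilon_1(AS)=e^{3\pi i/4}\epsilon_1(A)$.
   Context: For integers $k>0$ and $h$ with $\gcd(h,k)=1$, the Dedekind sum is $s(h,k)=\sum_{r=1}^{k-1}\frac{r}{k}\left(\frac{hr}{k}-\left\lfloor\frac{hr}{k}\right\rfloor-\frac12\right)$. For $M=\begin{pmatrix} a&b\\ c&d\end{pmatrix}\in SL_2(\mathbb{Z})$ with $c>0$, define $\epsilon_1(M)=-i\exp\!\left(3\pi i\left(\frac{a+d}{12c}-s(d,c)\right)\right)$. In both cases the lower-left entry of $AS$ is positive, so $\epsilon_1(AS)$ is defined. *)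

(* Defs.v *)
From Stdlib Require Import Reals ZArith List.
From Coquelicot Require Import Coquelicot.
Open Scope R_scope.

Definition rfloor (x : R) : R := IZR (Int_part x).

Definition dedekind_sum (h k : Z) : R :=
  fold_right Rplus 0
    (map (fun r : nat =>
            let hrk := IZR h * INR r / IZR k in
            INR r / IZR k * (hrk - rfloor hrk - 1 / 2))
         (seq 1 (Z.to_nat k - 1))).

Definition expi (theta : R) : C := (cos theta, sin theta).

Definition Ci : C := (0, 1).

(* epsilon_1 of M = [[a, b], [c, d]] (meaningful when c > 0):
   -i exp(3 pi i ((a+d)/(12c) - s(d,c))) *)
Definition epsilon1 (a b c d : Z) : C :=
  Cmult (Copp Ci)
    (expi (3 * PI * ((IZR a + IZR d) / (12 * IZR c) - dedekind_sum d c))).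

(* Main.v *)
Require Import Defs.
From Stdlib Require Import Reals ZArith List Lra Lia.
From Coquelicot Require Import Coquelicot.
From mathcomp Require Import all_boot.
From mathcomp Require Import zify.

Set Implicit Arguments. Unset Strict Implicit.
Open Scope nat_scope.


Section Core.
Variables h k : nat.
Hypothesis hpos : 0 < h.
Hypothesis kpos : 0 < k.
Hypothesis cop : coprime h k.

Definition TT h k := \sum_(r < k) r * (h * r %/ k).
Definition UU h k := \sum_(r < k) r * (h * r %% k).
Definition AA h k := \sum_(r < k) (h * r %/ k) * (h * r %/ k).
Definition BB h k := \sum_(r < k) (h * r %/ k).
Definition CC h k := \sum_(r < k) (h * r %/ k) * (h * r %% k).
Definition S1 n := \sum_(r < n) r.
Definition S2 n := \sum_(r < n) r * r.

Lemma perm_mod (f : nat -> nat) : \sum_(r < k) f (h * r %% k) = \sum_(r < k) f r.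
Proof.
pose g (i : 'I_k) : 'I_k := Ordinal (ltn_pmod (h * i) kpos).
have ginj : injective g.
  move=> i j /(congr1 val) /= Hij; apply/val_inj => /=.
  wlog le_ij : i j Hij / i <= j.
    move=> W; case: (leqP i j) => H; first by apply: W.
    by symmetry; apply: W => //; apply: ltnW.
  have : (h * j == h * i %[mod k]) by apply/eqP.
  rewrite eqn_mod_dvd ?leq_mul2l ?le_ij ?orbT // -mulnBr.
  rewrite Gauss_dvdr; last by rewrite coprime_sym.
  move=> D; case: (posnP (j - i)) => H0; first by lia.
  have := dvdn_leq H0 D; have := ltn_ord j; lia.
symmetry; rewrite (reindex_inj ginj) /=; done.
Qed.

Lemma F1 : h * S2 k = k * TT h k + UU h k.
Proof.
rewrite /S2 /TT /UU !big_distrr -big_split /=; apply: eq_bigr => r _.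
have E := divn_eq (h * r) k.
move: E; set q := h * r %/ k; set p := h * r %% k; clearbody q p => E.
nia.
Qed.

Lemma F2 : h * S1 k = k * BB h k + S1 k.
Proof.
rewrite {2}/S1 -(perm_mod id) /S1 /BB !big_distrr -big_split /=; apply: eq_bigr => r _.
have E := divn_eq (h * r) k.
move: E; set q := h * r %/ k; set p := h * r %% k; clearbody q p => E.
nia.
Qed.

Lemma F3 : h * h * S2 k = k * k * AA h k + 2 * k * CC h k + S2 k.
Proof.
rewrite {2}/S2 -(perm_mod (fun x => x * x)) /S2 /AA /CC !big_distrr -!big_split /=.
apply: eq_bigr => r _.
have E := divn_eq (h * r) k.
move: E; set q := h * r %/ k; set p := h * r %% k; clearbody q p => E.
nia.
Qed.

Lemma F4 : h * TT h k = k * AA h k + CC h k.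
Proof.
rewrite /TT /AA /CC !big_distrr -big_split /=; apply: eq_bigr => r _.
have E := divn_eq (h * r) k.
move: E; set q := h * r %/ k; set p := h * r %% k; clearbody q p => E.
nia.
Qed.
End Core.

Lemma F6 n : 2 * S1 n + n = n * n.
Proof.
elim: n => [|n IH]; first by rewrite /S1 big_ord0.
rewrite /S1 big_ord_recr /= -/(S1 n). nia.
Qed.

Lemma F7 n : 6 * S2 n + 3 * n * n = 2 * n * n * n + n.
Proof.
elim: n => [|n IH]; first by rewrite /S2 big_ord0.
rewrite /S2 big_ord_recr /= -/(S2 n). nia.
Qed.

Lemma count_le m n : \sum_(s < n) ((0 < s) && (s <= m)) = minn m n.-1.
Proof.
elim: n => [|n IH]; first by rewrite big_ord0 /=; lia.
rewrite big_ord_recr /= IH.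
case: (ltnP 0 n) => H1; case: (leqP n m) => H2 /=; lia.
Qed.

Lemma tri m n : m < n -> 2 * \sum_(r < n) r * (m < r) + m * m + m = 2 * S1 n.
Proof.
elim: n => [//|n IH] Hmn.
rewrite big_ord_recr /S1 big_ord_recr /= -/(S1 n).
case: (ltngtP m n) => Hm.
- move: (IH Hm); rewrite muln1; set X := (\sum_(i < n) _); move=> ?; lia.
- lia.
- rewrite muln0 addn0 big1; last by move=> [r Hr] _ /=; rewrite Hm ltnNge (ltnW Hr) muln0.
  have := F6 n; rewrite Hm; lia.
Qed.


Section F5.
Variables h k : nat.
Hypothesis hpos : 0 < h.
Hypothesis kpos : 0 < k.
Hypothesis cop : coprime h k.

Lemma F5 : 2 * TT h k + AA k h + BB k h + 2 * S1 k = 2 * h * S1 k.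
Proof.
have Hq (r : 'I_k) : h * r %/ k = \sum_(s < h) ((0 < s) && (k * s <= h * r)).
  rewrite (eq_bigr (fun s : 'I_h => nat_of_bool ((0 < s) && (s <= h * r %/ k)))); last first.
    by move=> s _; rewrite leq_divRL // mulnC.
  rewrite count_le.
  have : h * r %/ k < h by rewrite ltn_divLR //; have := ltn_ord r; nia.
  lia.
have ET : TT h k = \sum_(s < h) \sum_(r < k) r * ((0 < s) && (k * s <= h * r)).
  rewrite /TT (eq_bigr (fun r : 'I_k => \sum_(s < h) r * ((0 < s) && (k * s <= h * r)))).
    exact: exchange_big.
  by move=> r _; rewrite Hq big_distrr.
have Hs (s : 'I_h) : 2 * (\sum_(r < k) r * ((0 < s) && (k * s <= h * r)))
     + (k * s %/ h) * (k * s %/ h) + (k * s %/ h) = (0 < s) * (2 * S1 k).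
  case: (posnP s) => Hs0.
    rewrite Hs0 big1 /=; last by move=> r _; rewrite muln0.
    by rewrite !muln0 div0n.
  rewrite mul1n -(tri (m := k * s %/ h)); last first.
    by rewrite ltn_divLR //; have := ltn_ord s; nia.
  congr (2 * _ + _ + _); apply: eq_bigr => r _.
  suff -> : (k * s <= h * r) = (k * s %/ h < r) by [].
  rewrite ltn_divLR //.
  have Hne : k * s != h * r.
    apply/negP => /eqP E.
    have : h %| k * s by rewrite E dvdn_mulr.
    rewrite Gauss_dvdr; last exact: cop.
    move=> /(dvdn_leq Hs0); have := ltn_ord s; lia.
  by rewrite leq_eqVlt (negbTE Hne) /= [r * h]mulnC.
have Ecount : \sum_(s < h) ((0 < s) : nat) = h.-1.
  rewrite -(minn_idPr (leq_pred h)) -[in RHS](count_le h h); apply: eq_bigr => s _.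
  by rewrite (ltnW (ltn_ord s)) andbT.
rewrite ET /AA /BB big_distrr -!big_split /=.
rewrite (eq_bigr (fun s : 'I_h => (0 < s) * (2 * S1 k))); last by move=> s _; rewrite -Hs.
rewrite -big_distrl /= Ecount; nia.
Qed.
End F5.

Unset Implicit Arguments.
Open Scope R_scope.
Lemma toR (a b : nat) : a = b -> INR a = INR b. Proof. by move=> ->. Qed.

Ltac natR H := move/toR: H; rewrite -!plusE -!multE ?plus_INR ?mult_INR /= => H.

Lemma recipR (h k : nat) : (0 < h)%N -> (0 < k)%N -> coprime h k ->
  let H := INR h in let K := INR k in
  12 * (H * H) * INR (UU h k) + 12 * (K * K) * INR (UU k h) + 9 * (H*H) * (K*K)
  = 3 * (H*H) * (K*K) * (H + K) + H * K * (H*H + K*K + 1).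
Proof.
move=> hp kp cop H K; subst H K.
have ck : coprime k h by rewrite coprime_sym.
have e1 := F1 hp kp cop. have e1' := F1 kp hp ck. have e5 := F5 hp kp cop.
have e2' := F2 kp hp ck. have e3' := F3 kp hp ck. have e4' := F4 kp hp ck.
have f6h := F6 h. have f6k := F6 k. have f7h := F7 h. have f7k := F7 k.
natR e1. natR e1'. natR e5. natR e2'. natR e3'. natR e4'. natR f6h. natR f6k. natR f7h. natR f7k.
move: e1 e1' e5 e2' e3' e4' f6h f6k f7h f7k.
move: (INR (UU h k)) (INR (UU k h)) (INR (TT h k)) (INR (TT k h)) (INR (AA k h))
  (INR (BB k h)) (INR (CC k h)) (INR (S1 h)) (INR (S1 k)) (INR (S2 h)) (INR (S2 k)) (INR h) (INR k)
  => U1 U2 T1 T2 A2 B2 C2 S1h S1k S2h S2k H K e1 e1' e5 e2' e3' e4' f6h f6k f7h f7k.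
have z1 : H*S2k - (K*T1+U1) = 0 by lra.
have z2 : K*S2h - (H*T2+U2) = 0 by lra.
have z3 : (2*T1+A2+B2+2*S1k) - (2*H*S1k) = 0 by lra.
have z4 : K*K*S2h - (H*H*A2+2*H*C2+S2h) = 0 by lra.
have z5 : K*T2 - (H*A2+C2) = 0 by lra.
have z6 : K*S1h - (H*B2+S1h) = 0 by lra.
have z7 : (6*S2k+3*K*K) - (2*K*K*K+K) = 0 by lra.
have z8 : (6*S2h+3*H*H) - (2*H*H*H+H) = 0 by lra.
have z9 : (2*S1k+K) - K*K = 0 by lra.
have z10 : (2*S1h+H) - H*H = 0 by lra.
apply Rminus_diag_uniq.
transitivity (-12*(H*H)*(H*S2k - (K*T1+U1)) - 12*(K*K)*(K*S2h - (H*T2+U2))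
  - 6*(H*H)*K*((2*T1+A2+B2+2*S1k) - (2*H*S1k))
  + 6*K*(K*K*S2h - (H*H*A2+2*H*C2+S2h)) - 12*H*K*(K*T2 - (H*A2+C2))
  - 6*H*K*(K*S1h - (H*B2+S1h))
  + 2*(H*H*H)*((6*S2k+3*K*K) - (2*K*K*K+K)) + (K*K*K+K)*((6*S2h+3*H*H) - (2*H*H*H+H))
  - 6*(H*H)*K*(H-1)*((2*S1k+K) - K*K) + 3*H*K*(K-1)*((2*S1h+H) - H*H)).
  ring.
rewrite z1 z2 z3 z4 z5 z6 z7 z8 z9 z10; ring.
Qed.

Lemma term_Z (h k : Z) (r : nat) : (0 < k)%Z ->
  let hrk := IZR h * INR r / IZR k in
  hrk - rfloor hrk = IZR ((h * Z.of_nat r) mod k) / IZR k.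
Proof.
move=> kp hrk.
have Hk : IZR k <> 0 by apply: not_0_IZR; lia.
have Hk' : 0 < IZR k by apply: IZR_lt.
set n := (h * Z.of_nat r)%Z.
have Hn : IZR h * INR r = IZR n by rewrite /n mult_IZR INR_IZR_INZ.
have Edm := Z.div_mod n k ltac:(lia).
have [Hm0 Hm1] := Z.mod_pos_bound n k kp.
set q := (n / k)%Z in Edm *. set m := (n mod k)%Z in Edm Hm0 Hm1 *.
have Eup : up hrk = (q + 1)%Z.
  symmetry; apply: tech_up.
  - rewrite /hrk Hn plus_IZR Edm plus_IZR mult_IZR.
    apply/(Rmult_lt_reg_r (IZR k)) => //.
    have : IZR m < IZR k by apply: IZR_lt.
    have -> : (IZR k * IZR q + IZR m) / IZR k * IZR k = IZR k * IZR q + IZR m by field.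
    move=> ?; nra.
  - rewrite /hrk Hn plus_IZR Edm plus_IZR mult_IZR.
    apply/(Rmult_le_reg_r (IZR k)) => //.
    have : 0 <= IZR m by apply: IZR_le.
    have -> : ((IZR k * IZR q + IZR m) / IZR k + 1) * IZR k = IZR k * IZR q + IZR m + IZR k by field.
    move=> ?; nra.
rewrite /rfloor /Int_part Eup.
rewrite /hrk Hn (_ : (q + 1 - 1 = q)%Z); last lia.
rewrite Edm plus_IZR mult_IZR; field; done.
Qed.

Lemma ds_Z (h k : Z) : (0 < k)%Z ->
  dedekind_sum h k = fold_right Rplus 0 (map (fun r : nat => INR r / IZR k *
     (IZR ((h * Z.of_nat r) mod k) / IZR k - 1 / 2)) (List.seq 1 (Z.to_nat k - 1))).
Proof.
move=> kp; rewrite /dedekind_sum; f_equal; apply: map_ext => r.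
have := term_Z h k r kp; cbv zeta => <-; done.
Qed.

Lemma modn_Z (m d : nat) : (0 < d)%N -> Z.of_nat (m %% d) = (Z.of_nat m mod Z.of_nat d)%Z.
Proof.
move=> dp; have E := divn_eq m d; have L := ltn_pmod m dp.
apply: (Z.mod_unique _ _ (Z.of_nat (m %/ d))); lia.
Qed.

Lemma seq_iota a n : List.seq a n = iota a n.
Proof. by elim: n a => [|n IH] a //=; rewrite IH. Qed.

Lemma sum_fold (K : R) (g : nat -> nat) (l : list nat) : K <> 0 ->
  fold_right Rplus 0 (map (fun r => INR r / K * (INR (g r) / K - 1 / 2)) l)
  = INR (\sum_(r <- l) r * g r) / (K * K) - INR (\sum_(r <- l) r) / (2 * K).
Proof.
move=> HK; elim: l => [|a l IH] /=; first by rewrite !big_nil /=; field.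
rewrite !big_cons IH -!plusE -!multE !plus_INR mult_INR; field; done.
Qed.

Lemma sum_ord_seq (F : nat -> nat) (k : nat) : (0 < k)%N -> F 0%N = 0%N ->
  \sum_(r <- List.seq 1 (k - 1)) F r = \sum_(r < k) F r.
Proof.
move=> kp F0; rewrite seq_iota -(big_mkord xpredT F) /index_iota subn0.
case: k kp => [//|k] _; rewrite /= big_cons F0 subn1 /=; done.
Qed.

Lemma ds_nat (h k : nat) : (0 < k)%N ->
  dedekind_sum (Z.of_nat h) (Z.of_nat k) = INR (UU h k) / (INR k * INR k) - (INR k - 1) / 4.
Proof.
move=> kp.
have Hk : INR k <> 0 by apply: not_0_INR; lia.
rewrite ds_Z; last lia.
rewrite Nat2Z.id -INR_IZR_INZ.
rewrite (_ : map _ _ = map (fun r : nat => INR r / INR k * (INR ((h * r) %% k) / INR k - 1 / 2)) (List.seq 1 (k - 1))); last first.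
  apply: map_ext => r; rewrite [INR ((h * r) %% k)]INR_IZR_INZ modn_Z // -multE Nat2Z.inj_mul //.
rewrite sum_fold // !sum_ord_seq //; try by rewrite mul0n.
have E := F6 k; move/toR: E; rewrite -!plusE -!multE !plus_INR !mult_INR /= => E.
rewrite -/(UU h k) -/(S1 k).
have -> : INR (S1 k) = (INR k * INR k - INR k) / 2 by lra.
field; done.
Qed.

Lemma fold_neg (f g : nat -> R) (l : list nat) :
  (forall r, In r l -> f r = - g r) ->
  fold_right Rplus 0 (map f l) = - fold_right Rplus 0 (map g l).
Proof.
elim: l => [|a l IH] H /=; first lra.
rewrite IH; last by move=> r Hr; apply: H; right.
rewrite (H a); [lra | by left].
Qed.

Lemma ds_neg (x y : Z) : (0 < x)%Z -> Z.gcd x y = 1%Z ->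
  dedekind_sum (- y) x = - dedekind_sum y x.
Proof.
move=> xp g1; rewrite !ds_Z //; apply: fold_neg => r /in_seq Hr.
have Hx : IZR x <> 0 by apply: not_0_IZR; lia.
have Hnz : ((y * Z.of_nat r) mod x <> 0)%Z.
  move=> /Z.mod_divide H; have {H} H : (x | y * Z.of_nat r)%Z by apply: H; lia.
  have := Z.gauss _ _ _ H g1 => D.
  have Hr1 : (0 < Z.of_nat r < x)%Z by move: Hr => [? ?]; lia.
  have := Z.divide_pos_le x (Z.of_nat r) ltac:(lia) D; lia.
rewrite /= Z.mul_opp_l Z.mod_opp_l_nz //; last lia.
rewrite minus_IZR; field; done.
Qed.

Lemma coprime_of_Z (m n : nat) : Z.gcd (Z.of_nat m) (Z.of_nat n) = 1%Z -> coprime m n.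
Proof.
move=> g1; rewrite /coprime; apply/eqP.
have /dvdnP [a Ha] := dvdn_gcdl m n.
have /dvdnP [b Hb] := dvdn_gcdr m n.
have D1 : (Z.of_nat (gcdn m n) | Z.of_nat m)%Z by exists (Z.of_nat a); lia.
have D2 : (Z.of_nat (gcdn m n) | Z.of_nat n)%Z by exists (Z.of_nat b); lia.
have := Z.gcd_greatest _ _ _ D1 D2; rewrite g1 => D.
have := Z.divide_1_r_nonneg (Z.of_nat (gcdn m n)) ltac:(lia) D; lia.
Qed.

Lemma eps_shift (phi theta : R) :
  Cmult (Copp Ci) (expi (phi + theta)) = Cmult (expi phi) (Cmult (Copp Ci) (expi theta)).
Proof.
rewrite /Cmult /Copp /Ci /expi /= cos_plus sin_plus; f_equal; ring.
Qed.

Lemma key_nat (C D : nat) : (0 < C)%N -> (0 < D)%N -> coprime C D ->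
  dedekind_sum (Z.of_nat C) (Z.of_nat D) + dedekind_sum (Z.of_nat D) (Z.of_nat C) =
  (INR C * INR C + INR D * INR D + 1) / (12 * INR C * INR D) - 1 / 4.
Proof.
move=> Cp Dp cop.
rewrite !ds_nat //.
have R := recipR C D Cp Dp cop; cbv zeta in R.
have HC : INR C <> 0 by apply: not_0_INR; lia.
have HD : INR D <> 0 by apply: not_0_INR; lia.
have -> : INR (UU C D) = (3 * (INR C * INR C) * (INR D * INR D) * (INR C + INR D) +
   INR C * INR D * (INR C * INR C + INR D * INR D + 1) - 9 * (INR C * INR C) * (INR D * INR D)
   - 12 * (INR D * INR D) * INR (UU D C)) / (12 * (INR C * INR C)).
  rewrite -R; field; done.
field; done.
Qed.

Lemma key_Z (c d : Z) : (0 < c)%Z -> (0 < d)%Z -> Z.gcd c d = 1%Z ->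
  dedekind_sum c d + dedekind_sum d c =
  (IZR c * IZR c + IZR d * IZR d + 1) / (12 * IZR c * IZR d) - 1 / 4.
Proof.
move=> cp dp g1.
have [C EC] : exists C, c = Z.of_nat C by exists (Z.to_nat c); lia.
have [D ED] : exists D, d = Z.of_nat D by exists (Z.to_nat d); lia.
subst c d; rewrite -!INR_IZR_INZ; apply: key_nat; [lia | lia | exact: coprime_of_Z].
Qed.

Theorem lemma2 (a b c d : Z) :
  (a * d - b * c = 1)%Z -> (0 < c)%Z -> d <> 0%Z ->
  ((0 < d)%Z ->
     epsilon1 b (- a) d (- c) = Cmult (expi (- (3 * PI / 4))) (epsilon1 a b c d)) /\
  ((d < 0)%Z ->
     epsilon1 (- b) a (- d) c = Cmult (expi (3 * PI / 4)) (epsilon1 a b c d)).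
Proof.
move=> Hdet cp dn0.
have Hdet' : IZR a * IZR d - IZR b * IZR c = 1.
  by rewrite -!mult_IZR -minus_IZR Hdet.
have Hc : IZR c <> 0 by apply: not_0_IZR; lia.
split=> dp.
- have g1 : Z.gcd c d = 1%Z.
    apply: Z.bezout_1_gcd; exists (- b)%Z, a; lia.
  have g2 : Z.gcd d c = 1%Z by rewrite Z.gcd_comm.
  have Hd : IZR d <> 0 by apply: not_0_IZR; lia.
  rewrite /epsilon1 -eps_shift; do 2 f_equal.
  rewrite ds_neg // opp_IZR.
  have K := key_Z c d cp dp g1.
  have -> : dedekind_sum c d = (IZR c * IZR c + IZR d * IZR d + 1) / (12 * IZR c * IZR d) - 1 / 4
     - dedekind_sum d c by lra.
  have -> : IZR b = (IZR a * IZR d - 1) / IZR c.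
    by apply: (Rmult_eq_reg_r (IZR c)) => //; rewrite /Rdiv Rmult_assoc Rinv_l //; lra.
  field; split; done.
- set e := (- d)%Z.
  have ep : (0 < e)%Z by rewrite /e; lia.
  have Hde : d = (- e)%Z by rewrite /e; lia.
  have g1 : Z.gcd c e = 1%Z.
    apply: Z.bezout_1_gcd; exists (- b)%Z, (- a)%Z; rewrite /e; lia.
  have He : IZR e <> 0 by apply: not_0_IZR; lia.
  rewrite /epsilon1 -eps_shift; do 2 f_equal.
  rewrite -/e {2}Hde ds_neg //.
  have K := key_Z c e cp ep g1.
  have Hd' : IZR d = - IZR e by rewrite Hde opp_IZR.
  rewrite Hd' in Hdet' *.
  have -> : dedekind_sum c e = (IZR c * IZR c + IZR e * IZR e + 1) / (12 * IZR c * IZR e) - 1 / 4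
     - dedekind_sum e c by lra.
  rewrite opp_IZR.
  have -> : IZR b = (- IZR a * IZR e - 1) / IZR c.
    by apply: (Rmult_eq_reg_r (IZR c)) => //; rewrite /Rdiv Rmult_assoc Rinv_l //; lra.
  field; split; done.
Qed.
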